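(* Let $1\le s<t$ be integers and let $n$ be sufficiently large. If $G$ is a $K_{s,t}$-saturated $n$ by $n$ bipartite graph with minimum degree $\delta<t-1$, then $G$ has at least $(s+t-2)n-(t-1)(t-2)$ edges.
   Context: An $n$ by $n$ bipartite graph $G$ has two color classes $U,U'$ with $|U|=|U'|=n$. Such a $G$ is called $K_{s,t}$-saturated if $G$ contains no subgraph isomorphic to $K_{s,t}$ (with either side of $K_{s,t}$ lying in either class), but adding any missing edge $uu'$ with $u\in U$, $u'\in U'$ creates a subgraph isomorphic to $K_{s,t}$ (with either orientation). *)

(* Defs.v *)
From mathcomp Require Import all_boot.
Set Implicit Arguments. Unset Strict Implicit. Unset Printing Implicit Defensive.

(* An n by n bipartite graph: colour classes U = 'I_n and U' = 'I_n (two
   disjoint copies); the graph is given by its edge set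
   E : {set 'I_n * 'I_n}, where (u, u') \in E means u \in U is adjacent to
   u' \in U'. *)

Definition has_Kab n (E : {set 'I_n * 'I_n}) (a b : nat) : Prop :=
  exists (A B : {set 'I_n}),
    [/\ #|A| = a, #|B| = b & forall u v, u \in A -> v \in B -> (u, v) \in E].

Definition contains_Kst n (E : {set 'I_n * 'I_n}) (s t : nat) : Prop :=
  has_Kab E s t \/ has_Kab E t s.

Definition Kst_saturated n (E : {set 'I_n * 'I_n}) (s t : nat) : Prop :=
  ~ contains_Kst E s t /\
  forall u v, (u, v) \notin E -> contains_Kst ((u, v) |: E) s t.

Definition degU n (E : {set 'I_n * 'I_n}) (u : 'I_n) : nat :=
  #|[set v | (u, v) \in E]|.
Definition degU' n (E : {set 'I_n * 'I_n}) (v : 'I_n) : nat :=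
  #|[set u | (u, v) \in E]|.

(* Minimum degree over all 2n vertices (degrees are <= n, so n is a neutral
   starting value; the case n = 0 is irrelevant). *)
Definition min_degree n (E : {set 'I_n * 'I_n}) : nat :=
  minn (\big[minn/n]_(u : 'I_n) degU E u) (\big[minn/n]_(v : 'I_n) degU' E v).

(* Main.v *)
Require Import Defs.
From mathcomp Require Import all_boot zify.
Set Implicit Arguments. Unset Strict Implicit.

Lemma card_set_sum (T : finType) (P : pred T) : #|[set v | P v]| = \sum_v P v.
Proof.
rewrite -sum1_card big_mkcond /=; apply: eq_bigr => i _; rewrite inE.
by case: (P i).
Qed.

Lemma card_setin_sum (T : finType) (A : {pred T}) (P : pred T) :
  #|[set v in A | P v]| = \sum_(v in A) P v.
Proof.
rewrite -sum1_card big_mkcond [RHS]big_mkcond /=; apply: eq_bigr => i _; rewrite inE.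
by case: (i \in A); case: (P i).
Qed.

Lemma cardE_sum n (E : {set 'I_n * 'I_n}) :
  #|E| = \sum_(y : 'I_n) #|[set v | (y, v) \in E]|.
Proof.
under eq_bigr => y _ do rewrite card_set_sum.
rewrite pair_big /= -sum1_card big_mkcond /=.
by apply: eq_bigr => -[a b] _ /=; case: ((a, b) \in E).
Qed.

Lemma sat_ext n (E : {set 'I_n * 'I_n}) s t u v :
  Kst_saturated E s t -> (u, v) \notin E ->
  exists A B : {set 'I_n},
    [/\ (#|A| = s /\ #|B| = t) \/ (#|A| = t /\ #|B| = s), u \in A, v \in B &
        forall y w, y \in A -> w \in B -> (y, w) != (u, v) -> (y, w) \in E].
Proof.
move=> [nK sat] uv.
have key: forall a b, has_Kab ((u, v) |: E) a b -> ~ has_Kab E a b ->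
  exists A B : {set 'I_n}, [/\ #|A| = a, #|B| = b, u \in A, v \in B &
    forall y w, y \in A -> w \in B -> (y, w) != (u, v) -> (y, w) \in E].
  move=> a b [A [B [cA cB H]]] nH.
  have HE: forall y w, y \in A -> w \in B -> (y, w) != (u, v) -> (y, w) \in E.
    move=> y w yA wB ne; have := H y w yA wB.
    by rewrite in_setU1 (negbTE ne).
  case: (boolP (u \in A)) => uA; last first.
    exfalso; apply: nH; exists A, B; split=> // y w yA wB; apply: HE => //.
    rewrite xpair_eqE negb_and; apply/orP; left.
    by apply: contraNneq uA => <-.
  case: (boolP (v \in B)) => vB; last first.
    exfalso; apply: nH; exists A, B; split=> // y w yA wB; apply: HE => //.
    rewrite xpair_eqE negb_and; apply/orP; right.
    by apply: contraNneq vB => <-.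
  by exists A, B; split.
case: (sat u v uv) => [h|h].
  have [A [B [cA cB uA vB H]]] := key s t h (fun k => nK (or_introl k)).
  by exists A, B; split=> //; left.
have [A [B [cA cB uA vB H]]] := key t s h (fun k => nK (or_intror k)).
by exists A, B; split=> //; right.
Qed.

Lemma deg_ge n (E : {set 'I_n * 'I_n}) s t y :
  s < t -> s <= n -> Kst_saturated E s t -> s.-1 <= #|[set v | (y, v) \in E]|.
Proof.
move=> st sn sat.
case: (boolP [exists v, (y, v) \notin E]) => [/existsP [v yv]|].
  have [A [B [cAB yA vB H]]] := sat_ext sat yv.
  have sub: B :\ v \subset [set w | (y, w) \in E].
    apply/subsetP => w; rewrite !inE => /andP [wv wB].
    apply: H => //; rewrite xpair_eqE negb_and wv orbT //.
  have := subset_leq_card sub.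
  have := cardsD1 v B; rewrite vB /=.
  move=> h1 h2; case: cAB => -[_ e]; rewrite e in h1; move: h1 h2; set k := #|B :\ v|; set d := #|[set w | _]|; move=> h1 h2; rewrite -subn1; lia.
rewrite negb_exists => /forallP all.
have ->: [set v | (y, v) \in E] = setT.
  by apply/setP => w; rewrite !inE; have := all w; case: ((y, w) \in E).
rewrite cardsT card_ord -subn1; lia.
Qed.

Lemma core n (E : {set 'I_n * 'I_n}) s t x :
  1 <= s -> s < t -> s <= n -> Kst_saturated E s t -> degU E x < t.-1 ->
  (s + t - 2) * n <= #|E| + (t - 1) * (t - 2).
Proof.
move=> s1 st sn sat dx.
set S := [set v | (x, v) \in E].
set D := ~: S.
set Y := [set y | s.-1 <= #|[set v | (y, v) \in E] :&: S|].
have cS : #|S| = degU E x by [].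
have cD : #|D| = n - degU E x.
  rewrite /D; move: (cardsC S); rewrite card_ord cS; set k := #|~: S|; lia.
have keyD : forall v, v \in D -> t.-1 <= #|[set y in Y | (y, v) \in E]|.
  move=> v; rewrite inE => vS.
  have xv : (x, v) \notin E by rewrite inE in vS.
  have [A [B [cAB xA vB H]]] := sat_ext sat xv.
  have subB : B :\ v \subset S.
    apply/subsetP => w; rewrite !inE => /andP [wv wB].
    apply: H => //; rewrite xpair_eqE negb_and wv orbT //.
  have hB := subset_leq_card subB.
  have hB1 := cardsD1 v B; rewrite vB /= in hB1.
  have [cA cB] : #|A| = t /\ #|B| = s.
    case: cAB => -[e1 e2] //; rewrite e2 in hB1; rewrite cS in hB.
    exfalso; move: dx hB hB1; rewrite -subn1; set k := #|B :\ v|; set d := degU E x; lia.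
  have subA : A :\ x \subset [set y in Y | (y, v) \in E].
    apply/subsetP => y; rewrite !inE => /andP [yx yA].
    have yne : forall w, (y, w) != (x, v).
      by move=> w; rewrite xpair_eqE negb_and yx.
    rewrite (H y v yA vB (yne v)) andbT.
    have subB2 : B :\ v \subset [set w | (y, w) \in E] :&: S.
      apply/subsetP => w wBv; rewrite inE (subsetP subB w wBv) andbT inE.
      by move: wBv; rewrite !inE => /andP [_ wB]; apply: H.
    have := subset_leq_card subB2.
    move: hB1; rewrite cB; move=> hB1 h2; move: hB1 h2; set k := #|B :\ v|; set d := #|_ :&: S|.
    rewrite -subn1; lia.
  have := subset_leq_card subA.
  have := cardsD1 x A; rewrite xA /= cA.
  move=> h1 h2; move: h1 h2; set k := #|A :\ x|; set d := #|[set _ in Y | _]|; rewrite -subn1; lia.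
set N := fun y => #|[set v | (y, v) \in E]|.
set g := fun y => if y \in Y then #|[set v | (y, v) \in E] :&: D| else 0.
have pw : forall y, s.-1 + g y <= N y.
  move=> y; rewrite /g /N.
  case: ifP => yY; last by rewrite addn0; exact: (deg_ge _ st sn sat).
  move: yY; rewrite inE => yY.
  have := cardsID S [set v | (y, v) \in E].
  rewrite setDE => <-.
  by rewrite leq_add2r.
have sumg : \sum_y g y = \sum_(y in Y) \sum_(v in D) ((y, v) \in E).
  rewrite [RHS]big_mkcond /=; apply: eq_bigr => y _; rewrite /g.
  case: (y \in Y) => //.
  rewrite -card_setin_sum; apply: eq_card => v; rewrite !inE andbC //.
have : (s.-1) * n + (t.-1) * (n - degU E x) <= #|E|.
  rewrite cardE_sum.
  apply: leq_trans; last by apply: leq_sum => y _; apply: (pw y).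
  rewrite big_split /= sum_nat_const card_ord mulnC leq_add2l sumg exchange_big /=.
  rewrite -cD mulnC -sum_nat_const; apply: leq_sum => v vD.
  by rewrite -card_setin_sum; apply: keyD.
move: dx; rewrite -!subn1.
have : degU E x <= n by rewrite /degU; apply: (leq_trans (max_card _)); rewrite card_ord.
set d := degU E x; move=> dn dx h.
nia.
Qed.

Lemma has_Kab_T n (F G : {set 'I_n * 'I_n}) a b :
  (forall u v, (u, v) \in F -> (v, u) \in G) -> has_Kab F a b -> has_Kab G b a.
Proof.
move=> h [A [B [cA cB H]]]; exists B, A; split=> // u v uB vA; exact: h (H _ _ vA uB).
Qed.

Lemma contains_T n (F G : {set 'I_n * 'I_n}) s t :
  (forall u v, (u, v) \in F -> (v, u) \in G) -> contains_Kst F s t -> contains_Kst G s t.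
Proof.
move=> h [k|k]; [right|left]; exact: has_Kab_T h k.
Qed.

Definition swp n (p : 'I_n * 'I_n) := (p.2, p.1).
Arguments swp {n} p.

Lemma sat_T n (E : {set 'I_n * 'I_n}) s t :
  Kst_saturated E s t -> Kst_saturated (swp @^-1: E) s t.
Proof.
move=> [nK sat]; split.
  move=> k; apply: nK; apply: (contains_T _ k) => u v; by rewrite inE.
move=> u v; rewrite inE /= => uv.
apply: (contains_T _ (sat v u uv)) => a b; rewrite !inE /= => /orP [/eqP [-> ->]|h].
  by rewrite eqxx.
by rewrite h orbT.
Qed.

Lemma bigmin_lt n (f : 'I_n -> nat) c : c <= n ->
  \big[minn/n]_(u : 'I_n) f u < c -> exists u, f u < c.
Proof.
move=> cn h; case: (boolP [exists u, f u < c]) => [/existsP //|].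
rewrite negb_exists => /forallP all; exfalso.
have : c <= \big[minn/n]_(u : 'I_n) f u.
  apply: (big_ind (fun m => c <= m)) => //.
    by move=> a b ha hb; rewrite leq_min ha hb.
  by move=> u _; have := all u; rewrite -leqNgt.
by rewrite leqNgt h.
Qed.

Theorem proposition2p1 :
  forall s t : nat, 1 <= s -> s < t ->
  exists N : nat, forall n : nat, N <= n ->
  forall E : {set 'I_n * 'I_n},
    Kst_saturated E s t ->
    min_degree E < t.-1 ->
    (s + t - 2) * n <= #|E| + (t - 1) * (t - 2).
Proof.
move=> s t s1 st; exists t => n tn E sat md.
have sn : s <= n by apply: leq_trans (ltnW st) tn.
have cn : t.-1 <= n by apply: leq_trans (leq_pred t) tn.
move: md; rewrite /min_degree gtn_min => /orP [h|h].
  have [x hx] := bigmin_lt cn h; exact: core s1 st sn sat hx.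
have [x hx] := bigmin_lt cn h.
have cT : #|swp @^-1: E| = #|E|.
  apply: card_preimset => -[a b] [c d] /= [-> ->] //.
rewrite -cT; apply: (core (x := x) s1 st sn (sat_T sat)).
suff -> : degU (swp @^-1: E) x = degU' E x by [].
by rewrite /degU /degU'; apply: eq_card => v; rewrite !inE.
Qed.
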